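(* Let an FCA with state set $S$, neighborhood $m=l+1+r$, local rule $f$ and boundary type $b\in\{\text{null},\text{periodic}\}$ be given, and let $G$ be its reversibility graph. If $N$ is a negative vertex of $G$ with value $k\ge1$ and some circuit of length $r'$ passes through $N$, then for every integer $x\ge 0$ the FCA is not $(k+xr')$-cell-reversible.
   Context: A one-dimensional finite cellular automaton (FCA) is given by a state set $S=\{0,1,\dots,s-1\}$, integers $l,r\ge 0$ with neighborhood size $m=l+1+r\ge 2$, a local rule $f:S^m\to S$, and a boundary type $b\in\{\text{null},\text{periodic}\}$. For $n\ge 1$ the global map $\tau_n:S^n\to S^n$ sends $(x_0,\dots,x_{n-1})$ to $(y_0,\dots,y_{n-1})$ with $y_i=f(x_{i-l},\dots,x_{i+r})$, where for the null boundary $x_j=0$ whenever $j<0$ or $j>n-1$, and for the periodic boundary indices are taken modulo $n$. The FCA is $n$-cell-reversible if $\tau_n$ is a bijection (equivalently, since $S^n$ is finite, surjective). Reversibility graph (RG). Null boundary: vertices are subsets of $S^{m-1}$; the root is $N_0=\{(a_1,\dots,a_{m-1})\in S^{m-1}: a_1=\dots=a_l=0\}$; the acceptance set is $R=\{(a_1,\dots,a_{m-1})\in S^{m-1}: a_{m-r}=\dots=a_{m-1}=0\}$ (so $R=S^{m-1}$ if $r=0$); for a subset $N$ and $c\in S$, $\delta(N,c)=\{(a_1,\dots,a_{m-1})\in S^{m-1}:\exists a_0\in S,\ (a_0,\dots,a_{m-2})\in N,\ f(a_0,a_1,\dots,a_{m-1})=c\}$. Periodic boundary: vertices are subsets of $S^{m-1}\times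 S^{m-1}$; the root and the acceptance set are $N_0=R=\{(a,a):a\in S^{m-1}\}$; $\delta(N,c)=\{((a_1,\dots,a_{m-1}),(b_1,\dots,b_{m-1})):\exists b_0\in S,\ ((a_1,\dots,a_{m-1}),(b_0,\dots,b_{m-2}))\in N,\ f(b_0,\dots,b_{m-1})=c\}$. In both cases the RG is the directed graph whose vertex set consists of all subsets obtainable from $N_0$ by repeatedly applying $\delta$ (including $N_0$; equal subsets are the same vertex; the empty set may occur), with, for each vertex $N$ and each $c\in S$, an edge labelled $c$ from $N$ to $\delta(N,c)$. The value of a vertex $N$ is the length of a shortest directed path from $N_0$ to $N$. A vertex $N$ is negative if $N\cap R=\emptyset$. A circuit is an elementary directed cycle of the RG (a closed directed path with no repeated vertex other than its start = end; a loop is a circuit of length $1$); its length is its number of edges, and it passes through $N$ if $N$ is one of its vertices. *)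

(* Defs.v *)
From mathcomp Require Import all_boot.
Set Implicit Arguments. Unset Strict Implicit. Unset Printing Implicit Defensive.

Inductive boundary := Null | Periodic.

Section FCA.
(* State set S = {0,...,s-1} = 'I_s, with z the state 0;
   neighborhood m = l + 1 + r; local rule f : S^m -> S. *)
Variables (s l r : nat) (z : 'I_s).
Variable f : (l + r).+1.-tuple 'I_s -> 'I_s.

(* Value of cell with (integer) index p - l in configuration x of n cells. *)
Definition cellv (b : boundary) (n : nat) (x : n.-tuple 'I_s) (p : nat) : 'I_s :=
  match b with
  | Null => if (l <= p) && (p < n + l) then nth z x (p - l) else z
  | Periodic => nth z x ((p + n * l - l) %% n)
  end.

(* Global map tau_n : y_i = f(x_{i-l}, ..., x_{i+r}). *)
Definition tau (b : boundary) (n : nat) (x : n.-tuple 'I_s) : n.-tuple 'I_s :=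
  [tuple f [tuple cellv b x (i + t) | t < (l + r).+1] | i < n].

Definition n_cell_reversible (b : boundary) (n : nat) : Prop :=
  bijective (@tau b n).

Definition rgT (b : boundary) : finType :=
  match b with
  | Null => (l + r).-tuple 'I_s
  | Periodic => ((l + r).-tuple 'I_s * (l + r).-tuple 'I_s)%type
  end.

Definition root_null : {set (l + r).-tuple 'I_s} :=
  [set a : (l + r).-tuple 'I_s | [forall i : 'I_(l + r), (i < l) ==> (nth z a i == z)]].
Definition acc_null : {set (l + r).-tuple 'I_s} :=
  [set a : (l + r).-tuple 'I_s | [forall i : 'I_(l + r), (l <= i) ==> (nth z a i == z)]].
Definition delta_null (N : {set (l + r).-tuple 'I_s}) (c : 'I_s)
  : {set (l + r).-tuple 'I_s} :=
  [set a : (l + r).-tuple 'I_s | [exists a0 : 'I_s, [exists q in N,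
      (val q == belast a0 a) && (f (cons_tuple a0 a) == c)]]].

Definition diag_per : {set ((l + r).-tuple 'I_s * (l + r).-tuple 'I_s)} :=
  [set p : (l + r).-tuple 'I_s * (l + r).-tuple 'I_s | p.1 == p.2].
Definition delta_per (N : {set ((l + r).-tuple 'I_s * (l + r).-tuple 'I_s)})
  (c : 'I_s) : {set ((l + r).-tuple 'I_s * (l + r).-tuple 'I_s)} :=
  [set p : (l + r).-tuple 'I_s * (l + r).-tuple 'I_s | [exists b0 : 'I_s, [exists q in N,
      [&& q.1 == p.1, val q.2 == belast b0 p.2 & f (cons_tuple b0 p.2) == c]]]].

Definition rg_root (b : boundary) : {set rgT b} :=
  match b return {set rgT b} with
  | Null => root_null
  | Periodic => diag_per
  end.
Definition rg_acc (b : boundary) : {set rgT b} :=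
  match b return {set rgT b} with
  | Null => acc_null
  | Periodic => diag_per
  end.
Definition rg_delta (b : boundary) : {set rgT b} -> 'I_s -> {set rgT b} :=
  match b return {set rgT b} -> 'I_s -> {set rgT b} with
  | Null => delta_null
  | Periodic => delta_per
  end.

Definition rg_run (b : boundary) (N : {set rgT b}) (w : seq 'I_s) : {set rgT b} :=
  foldl (@rg_delta b) N w.

Definition rg_value (b : boundary) (N : {set rgT b}) (k : nat) : Prop :=
  (exists w : seq 'I_s, size w = k /\ rg_run (rg_root b) w = N) /\
  (forall w : seq 'I_s, rg_run (rg_root b) w = N -> k <= size w).

Definition rg_negative (b : boundary) (N : {set rgT b}) : Prop :=
  N :&: rg_acc b = set0.

Definition circuit_through (b : boundary) (N : {set rgT b}) (len : nat) : Prop :=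
  exists vs : seq {set rgT b},
    [/\ size vs = len, 0 < len, uniq vs, N \in vs &
        forall i, i < len ->
          exists c : 'I_s, rg_delta (nth set0 vs i) c = nth set0 vs (i.+1 %% len)].

End FCA.

(* Main.v *)
Require Import Defs.
From mathcomp Require Import all_boot.
Set Implicit Arguments. Unset Strict Implicit. Unset Printing Implicit Defensive.

Lemma val_mktuple_nat (T : Type) n (g : nat -> T) :
  val [tuple g (val t) | t < n] = mkseq g n.
Proof. by rewrite /= /mkseq -val_enum_ord -map_comp. Qed.

Lemma map_enum_mkseq (T : Type) n (g : nat -> T) :
  [seq g (val t) | t <- enum 'I_n] = mkseq g n.
Proof. by rewrite /mkseq -val_enum_ord -map_comp. Qed.

Lemma mkseqS' (T : Type) n (g : nat -> T) :
  mkseq g n.+1 = g 0 :: mkseq (fun t => g t.+1) n.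
Proof. by rewrite /mkseq /= (iotaDl 1 0) -map_comp. Qed.

Lemma belast_mkseq (T : Type) n (g : nat -> T) :
  belast (g 0) (mkseq (fun t => g t.+1) n) = mkseq g n.
Proof.
elim: n g => [|n IH] g //.
by rewrite mkseqS' /= (IH (fun t => g t.+1)) mkseqS'.
Qed.

Section Run.
Variables (s l r : nat) (z : 'I_s).
Variable f : (l + r).+1.-tuple 'I_s -> 'I_s.

Definition wt (e : nat -> 'I_s) (i : nat) : (l + r).-tuple 'I_s :=
  [tuple e (i + t) | t < l + r].
Definition wf (e : nat -> 'I_s) (i : nat) : (l + r).+1.-tuple 'I_s :=
  [tuple e (i + t) | t < (l + r).+1].

Lemma belast_wt e : val (wt e 0) = belast (e 0) (wt e 1).
Proof.
rewrite /wt !val_mktuple_nat /= -(belast_mkseq _ e).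
by rewrite /mkseq -val_enum_ord -map_comp.
Qed.

Lemma cons_wt e : cons_tuple (e 0) (wt e 1) = wf e 0.
Proof.
apply: val_inj; rewrite /=.
rewrite (map_enum_mkseq _ (fun t => e (1 + t))) (map_enum_mkseq _ (fun t => e (0 + t))).
by rewrite (mkseqS' _ (fun t => e (0 + t))).
Qed.

Lemma wt_shift e i : wt (fun p => e p.+1) i = wt e i.+1.
Proof. by apply: eq_mktuple => t; rewrite addSn. Qed.
Lemma wf_shift e i : wf (fun p => e p.+1) i = wf e i.+1.
Proof. by apply: eq_mktuple => t; rewrite addSn. Qed.

Lemma run_null (w : seq 'I_s) (N : {set (l + r).-tuple 'I_s}) (e : nat -> 'I_s) :
  wt e 0 \in N -> (forall i, i < size w -> f (wf e i) = nth z w i) ->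
  wt e (size w) \in foldl (delta_null f) N w.
Proof.
elim: w N e => [|c w IH] N e /= HN Hf; first by [].
rewrite -wt_shift; apply: IH.
- rewrite wt_shift inE; apply/existsP; exists (e 0); apply/existsP; exists (wt e 0).
  rewrite HN /=; apply/andP; split; apply/eqP; first exact: belast_wt.
  by rewrite cons_wt (Hf 0 isT).
- move=> i Hi; rewrite wf_shift; exact: (Hf i.+1).
Qed.

Lemma run_per (w : seq 'I_s) (N : {set (l + r).-tuple 'I_s * (l + r).-tuple 'I_s}) (A : (l + r).-tuple 'I_s) (e : nat -> 'I_s) :
  (A, wt e 0) \in N -> (forall i, i < size w -> f (wf e i) = nth z w i) ->
  (A, wt e (size w)) \in foldl (delta_per f) N w.
Proof.
elim: w N e => [|c w IH] N e /= HN Hf; first by [].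
rewrite -wt_shift; apply: IH.
- rewrite wt_shift inE; apply/existsP; exists (e 0); apply/existsP; exists (A, wt e 0).
  rewrite HN /= eqxx /=; apply/andP; split; apply/eqP; first exact: belast_wt.
  by rewrite cons_wt (Hf 0 isT).
- move=> i Hi; rewrite wf_shift; exact: (Hf i.+1).
Qed.
End Run.

Lemma run_cat s l r (f : (l + r).+1.-tuple 'I_s -> 'I_s) b (N : {set rgT s l r b}) w1 w2 :
  rg_run f N (w1 ++ w2) = rg_run f (rg_run f N w1) w2.
Proof. by rewrite /rg_run foldl_cat. Qed.

Lemma cycle_word s l r (f : (l + r).+1.-tuple 'I_s -> 'I_s) b (N : {set rgT s l r b}) len :
  circuit_through f N len -> exists u, size u = len /\ rg_run f N u = N.
Proof.
case=> vs [Hs Hl Hu HN Hc].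
set j := index N vs.
have Hj : j < len by rewrite -Hs index_mem.
have HNj : nth set0 vs j = N by rewrite nth_index.
have H : forall m, exists u, size u = m /\ rg_run f (nth set0 vs j) u = nth set0 vs ((j + m) %% len).
  elim=> [|m [u [Hsu Hru]]].
    by exists [::]; rewrite addn0 modn_small.
  have [c Hcc] := Hc ((j + m) %% len) (ltn_pmod _ Hl).
  exists (rcons u c); split; first by rewrite size_rcons Hsu.
  rewrite /rg_run foldl_rcons -/(rg_run f _ u) Hru Hcc.
  by rewrite -addn1 modnDml addn1 addnS.
have [u [Hsu Hru]] := H len.
exists u; split => //.
by rewrite -HNj Hru modnDr modn_small.
Qed.

Lemma cycle_iter s l r (f : (l + r).+1.-tuple 'I_s -> 'I_s) b (N : {set rgT s l r b}) u x :
  rg_run f N u = N -> rg_run f N (flatten (nseq x u)) = N.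
Proof.
move=> Hu; elim: x => [|x IH] //=.
by rewrite run_cat Hu IH.
Qed.

Theorem theorem2 (s l r : nat) (hs : 0 < s)
  (f : (l + r).+1.-tuple 'I_s -> 'I_s) (b : boundary)
  (hm : 2 <= l + 1 + r)
  (N : {set rgT s l r b}) (k r' : nat) :
  1 <= k ->
  rg_value (Ordinal hs) f N k ->
  rg_negative (Ordinal hs) N ->
  circuit_through f N r' ->
  forall x : nat, ~ n_cell_reversible (Ordinal hs) f b (k + x * r').
Proof.
move=> Hk [[w0 [Hw0 Hrw0]] _] Hneg Hcirc x.
have [u [Hsu Hru]] := cycle_word Hcirc.
set n := k + x * r'.
set W := w0 ++ flatten (nseq x u).
have HW : size W = n.
  rewrite /W size_cat Hw0 /n; congr (_ + _).
  rewrite size_flatten /shape map_nseq Hsu.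
  by clear; elim: x => [|x IH] //=; rewrite IH mulSn.
have HrW : rg_run f (rg_root l r (Ordinal hs) b) W = N.
  by rewrite /W run_cat Hrw0 cycle_iter.
have Hn : 0 < n by rewrite /n; apply: leq_trans Hk (leq_addr _ _).
have HWn : size W == n by rewrite HW.
set yt := Tuple HWn.
case=> g _ K.
have Hy := K yt.
set x0 := g yt in Hy.
set e := cellv l (Ordinal hs) b x0.
have Hf : forall i, i < size W -> f (wf l r e i) = nth (Ordinal hs) W i.
  move=> i Hi; rewrite HW in Hi.
  have := congr1 (fun t => tnth t (Ordinal Hi)) Hy.
  rewrite /tau tnth_mktuple => ->.
  by rewrite (tnth_nth (Ordinal hs)).
clearbody x0; clear Hy K g Hrw0 Hru Hcirc.
move: Hneg HrW; rewrite /rg_negative.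
move: N x0 @e Hf; case: b => N x0 e Hf Hneg HrW.
- have H0 : wt l r e 0 \in root_null l r (Ordinal hs).
    rewrite inE; apply/forallP => i; apply/implyP => Hi.
    by rewrite nth_mktuple /e /cellv add0n leqNgt Hi.
  have H1 : wt l r e (size W) \in N by rewrite -HrW; exact: run_null H0 Hf.
  have H2 : wt l r e (size W) \in acc_null l r (Ordinal hs).
    rewrite inE; apply/forallP => i; apply/implyP => Hi.
    by rewrite nth_mktuple /e /cellv HW ltn_add2l ltnNge Hi andbF.
  have : wt l r e (size W) \in N :&: rg_acc l r (Ordinal hs) Null by rewrite inE H1 H2.
  by rewrite Hneg inE.
- set A := wt l r e 0.
  have H0 : (A, A) \in diag_per s l r by rewrite inE.
  have H1 : (A, wt l r e (size W)) \in N by rewrite -HrW; exact: run_per H0 Hf.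
  have HA : wt l r e (size W) = A.
    rewrite HW; apply: eq_mktuple => t; rewrite /e /cellv add0n.
    congr (nth _ _ _).
    have Hle : l <= t + n * l by apply: leq_trans (leq_pmull _ Hn) (leq_addl _ _).
    by rewrite -addnA -addnBA // modnDl.
  rewrite HA in H1.
  have : (A, A) \in N :&: rg_acc l r (Ordinal hs) Periodic by rewrite inE H1 H0.
  by rewrite Hneg inE.
Qed.
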